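(* Let $K$ be the set of separable states of $\mathcal{B}(\mathbb{C}^2\otimes\mathbb{C}^2)$. Then the pure states $|01\rangle\langle01|$ and $|10\rangle\langle10|$ are not superposable in $K$.
   Context: States of $\mathcal{B}(\mathbb{C}^2\otimes\mathbb{C}^2)$ are identified with density operators on $\mathbb{C}^2\otimes\mathbb{C}^2$; a pure product state is $E\otimes F$ with $E,F$ rank-one projections on $\mathbb{C}^2$, and $K$ is the set of convex combinations of pure product states. $\{|0\rangle,|1\rangle\}$ is the standard orthonormal basis of $\mathbb{C}^2$ and $|ab\rangle=|a\rangle\otimes|b\rangle$. For a convex set $K$, $A(K)$ is the set of affine functions $K\to\mathbb{R}$, and for extreme points $x,y$ the affine ratio is $\langle x,y\rangle_K=\inf\{f(y): f\in A(K),\ \mathrm{range}(f)\subseteq[0,1],\ f(x)=1\}$. Extreme points $x,y$ are orthogonal if $\langle x,y\rangle_K=0$; orthogonal extreme points $x,y$ are superposable in $K$ if there is an extreme point $z$ of $K$ with $\langle x,z\rangle_K=\tfrac12=\langle y,z\rangle_K$. *)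

(* Defs.v *)
From HB Require Import structures.
From mathcomp Require Import all_boot all_order all_algebra.
From mathcomp Require Import complex mxtens.
From mathcomp Require Import classical_sets reals.

Set Implicit Arguments.
Unset Strict Implicit.
Unset Printing Implicit Defensive.
Import Order.TTheory GRing.Theory Num.Theory.
Local Open Scope ring_scope.

Section Separable.
Variable R : realType.

Local Notation C := (complex R).

(* operators on C^2 and on C^2 (x) C^2 = C^(2*2); the tensor product is
   mxtens.tensmx, whose index (a,b) |-> 2a+b, so |ab> is basis vector 2a+b *)
Notation op2 := 'M[C]_2.
Notation op4 := 'M[C]_(2 * 2).

Definition rc (t : R) : C := real_complex R t.

Definition adjoint n (A : 'M[C]_n) : 'M[C]_n := (map_mx Num.conj A)^T.

Definition rank_one_proj (E : op2) : Prop :=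
  E *m E = E /\ adjoint E = E /\ \rank E = 1%N.

Definition pure_product_state (A : op4) : Prop :=
  exists E F : op2, rank_one_proj E /\ rank_one_proj F /\ A = tensmx E F.

Definition Ksep (A : op4) : Prop :=
  exists (n : nat) (lam : 'I_n -> R) (P : 'I_n -> op4),
    (forall i, 0 <= lam i) /\ \sum_(i < n) lam i = 1 /\
    (forall i, pure_product_state (P i)) /\
    A = \sum_(i < n) rc (lam i) *: P i.

Definition cconv (t : R) (a b : op4) : op4 := rc t *: a + rc (1 - t) *: b.

Definition affine_on_K (f : op4 -> R) : Prop :=
  forall a b t, Ksep a -> Ksep b -> 0 <= t <= 1 ->
    f (cconv t a b) = t * f a + (1 - t) * f b.

Definition K_extreme (x : op4) : Prop :=
  Ksep x /\ forall a b t, Ksep a -> Ksep b -> 0 < t < 1 ->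
    x = cconv t a b -> a = x /\ b = x.

Definition affine_ratio (x y : op4) : R :=
  inf [set r : R | exists f : op4 -> R,
        affine_on_K f /\ (forall k, Ksep k -> 0 <= f k <= 1) /\
        f x = 1 /\ r = f y].

Definition K_orthogonal (x y : op4) : Prop :=
  K_extreme x /\ K_extreme y /\ affine_ratio x y = 0.

Definition K_superposable (x y : op4) : Prop :=
  K_orthogonal x y /\
  exists z, K_extreme z /\ affine_ratio x z = 2^-1 /\ affine_ratio y z = 2^-1.

Definition ketbra (a : 'I_2) : op2 := delta_mx a a.
Definition ketbra2 (a b : 'I_2) : op4 := tensmx (ketbra a) (ketbra b).

End Separable.

(* Main.v *)
Require Import Defs.
From HB Require Import structures.
From mathcomp Require Import all_boot all_order all_algebra.
From mathcomp Require Import complex mxtens.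
From mathcomp Require Import classical_sets reals.
From mathcomp Require Import ring lra.
Import Order.TTheory GRing.Theory Num.Theory.
Local Open Scope ring_scope.
Lemma sum2 (V : nmodType) (F : 'I_2 -> V) : \sum_(k < 2) F k = F 0 + F 1.
Proof. rewrite big_ord_recl big_ord1. congr (_ + F _). exact: val_inj. Qed.
Lemma ord2P (i : 'I_2) : i = 0 \/ i = 1.
Proof. case: i => [[|[|//]]] Hi; [left|right]; exact: val_inj. Qed.
Lemma proj_entries (R : realType) (E : 'M[complex R]_2) : rank_one_proj E ->
  exists a b b' : R, (0 <= a <= 1) /\ E 0 0 = rc a /\ E 1 1 = rc (1 - a) /\
     E 0 1 = (b +i* b')%C /\ E 1 0 = (b +i* (- b'))%C /\ a = a^+2 + b^+2 + b'^+2.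
Proof.
case=> Hid [Hadj Hrk].
have Ha i j : E i j = Num.conj (E j i) by rewrite -{1}Hadj /adjoint !mxE.
have Hm i j : E i j = E i 0 * E 0 j + E i 1 * E 1 j by rewrite -{1}Hid mxE sum2.
have e00 := Ha 0 0; have e11 := Ha 1 1; have e10 := Ha 1 0.
have m00 := Hm 0 0; have m01 := Hm 0 1; have m11 := Hm 1 1.
rewrite e10 in m00 m01 m11.
move: e00 e11 e10 m00 m01 m11.
case E00: (E 0 0) => [a a']; case E01: (E 0 1) => [b b']; case E11: (E 1 1) => [d d'].
case=> ha; case=> hd e10 [h1 h2] [h3 h4] [h5 h6].
have a'0 : a' = 0 by lra.
have d'0 : d' = 0 by lra.
subst a' d'.
have had : a + d = 1.
  case: (eqVneq (a + d) 1) => // hne.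
  have hb : b = 0.
    have : b * (1 - (a + d)) = 0 by nra.
    by move/eqP; rewrite mulf_eq0 subr_eq0 => /orP[/eqP //|/eqP h]; rewrite h eqxx in hne.
  have hb' : b' = 0.
    have : b' * (1 - (a + d)) = 0 by nra.
    by move/eqP; rewrite mulf_eq0 subr_eq0 => /orP[/eqP //|/eqP h]; rewrite h eqxx in hne.
  subst b b'.
  have : a * (a - 1) = 0 by nra.
  have : d * (d - 1) = 0 by nra.
  move/eqP; rewrite mulf_eq0 subr_eq0 => /orP[]/eqP hd0;
  move/eqP; rewrite mulf_eq0 subr_eq0 => /orP[]/eqP ha0; subst; rewrite ?addr0 ?add0r in hne;
    rewrite ?eqxx // in hne.
  - have E0 : E = 0.
      apply/matrixP => i j; rewrite mxE.
      by case: (ord2P i) => ->; case: (ord2P j) => ->; rewrite ?E00 ?E01 ?E11 ?e10; apply/eqP; rewrite eq_complex /= ?oppr0 ?eqxx.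
    by move: Hrk; rewrite E0 mxrank0.
  - have E1 : E = 1%:M.
      apply/matrixP => i j; rewrite mxE.
      by case: (ord2P i) => ->; case: (ord2P j) => ->; rewrite ?E00 ?E01 ?E11 ?e10; apply/eqP; rewrite eq_complex /= ?oppr0 ?eqxx.
    by move: Hrk; rewrite E1 mxrank1.
exists a, b, b'.
have hda : d = 1 - a by lra.
subst d.
split; first by apply/andP; split; nra.
split; first by [].
split; first by [].
split; first by [].
split; first by rewrite e10.
nra.
Qed.
Section S.
Variable R : realType.
Local Notation C := (complex R).
Local Notation op4 := 'M[C]_(2 * 2).

Lemma rcM (x y : R) : rc (x * y) = rc x * rc y.
Proof. by rewrite /rc rmorphM. Qed.
Lemma rc1 : rc (1 : R) = 1. Proof. by rewrite /rc rmorph1. Qed.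
Lemma rc0 : rc (0 : R) = 0. Proof. by rewrite /rc rmorph0. Qed.

Definition idx (i j : 'I_2) : 'I_(2 * 2) := mxtens_index (i, j).
Definition fe (i j : 'I_2) (A : op4) : R := complex.Re (A (idx i j) (idx i j)).

Lemma fe_add i j (A B : op4) : fe i j (A + B) = fe i j A + fe i j B.
Proof. by rewrite /fe mxE; case: (A _ _) => ? ?; case: (B _ _). Qed.
Lemma fe_scale i j s (A : op4) : fe i j (rc s *: A) = s * fe i j A.
Proof. rewrite /fe mxE; case: (A _ _) => u v /=; ring. Qed.
Lemma fe0 i j : fe i j (0 : op4) = 0.
Proof. by rewrite /fe mxE. Qed.
Lemma fe_sum i j n (lam : 'I_n -> R) (P : 'I_n -> op4) :
  fe i j (\sum_(k < n) rc (lam k) *: P k) = \sum_(k < n) lam k * fe i j (P k).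
Proof.
apply: (big_ind2 (fun A r => fe i j A = r)); first exact: fe0.
  by move=> ? ? ? ? h1 h2; rewrite fe_add h1 h2.
by move=> k _; rewrite fe_scale.
Qed.
Lemma fe_cconv i j t (a b : op4) : fe i j (cconv t a b) = t * fe i j a + (1 - t) * fe i j b.
Proof. by rewrite /cconv fe_add !fe_scale. Qed.

Lemma ketbra_proj (a : 'I_2) : rank_one_proj (ketbra R a).
Proof.
rewrite /rank_one_proj /ketbra mul_delta_mx mxrank_delta; split => //; split => //.
by rewrite /adjoint map_delta_mx trmx_delta.
Qed.

Lemma ketbra2_pure (a b : 'I_2) : pure_product_state (ketbra2 R a b).
Proof. exists (ketbra R a), (ketbra R b); split; [exact: ketbra_proj|split; [exact: ketbra_proj|by []]]. Qed.

Lemma pure_K (P : op4) : pure_product_state P -> Ksep P.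
Proof.
move=> hP; exists 1%N, (fun _ => 1), (fun _ => P).
split; first by move=> _; exact: ler01.
split; first by rewrite big_ord1.
split; first by [].
by rewrite big_ord1 rc1 scale1r.
Qed.

Lemma fe_k01 : fe 0 1 (ketbra2 R 0 1) = 1.
Proof. rewrite /fe /ketbra2 /idx tensmxE /ketbra !mxE /=; ring. Qed.
Lemma fe_k10 : fe 1 0 (ketbra2 R 1 0) = 1.
Proof. rewrite /fe /ketbra2 /idx tensmxE /ketbra !mxE /=; ring. Qed.
Lemma fe_k01' : fe 0 1 (ketbra2 R 1 0) = 0.
Proof. rewrite /fe /ketbra2 /idx tensmxE /ketbra !mxE /=; ring. Qed.


Lemma proj_ketbra (E : 'M[C]_2) : rank_one_proj E ->
  (E 0 0 = rc 1 -> E = ketbra R 0) /\ (E 0 0 = rc 0 -> E = ketbra R 1).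
Proof.
move=> /proj_entries [a [b [b' [ha [e00 [e11 [e01 [e10 hr]]]]]]]].
split => h; rewrite h in e00; case: e00 => ea; subst a;
  (have hb : b = 0 by nra); (have hb' : b' = 0 by nra); subst b b';
  apply/matrixP => i j; rewrite /ketbra mxE;
  case: (ord2P i) => ->; case: (ord2P j) => ->;
     rewrite ?h ?e11 ?e01 ?e10 /= ?subrr ?subr0 ?rc1 ?rc0 //;
     by apply/eqP; rewrite eq_complex /= ?oppr0 ?eqxx.
Qed.

Lemma pps_val (P : op4) : pure_product_state P -> exists E F a c,
  [/\ P = tensmx E F, rank_one_proj E, rank_one_proj F, E 0 0 = rc a & F 0 0 = rc c] /\
  [/\ 0 <= a <= 1, 0 <= c <= 1, fe 0 1 P = a * (1 - c) & fe 1 0 P = (1 - a) * c].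
Proof.
move=> [E [F [hE [hF ->]]]].
have := @proj_entries R E hE => [[a [b [b' [ha [e00 [e11 _]]]]]]].
have := @proj_entries R F hF => [[c [d [d' [hc [f00 [f11 _]]]]]]].
exists E, F, a, c; split; first by split.
split => //; rewrite /fe /idx tensmxE ?e00 ?e11 ?f00 ?f11 /=; ring.
Qed.

Lemma pure01 (P : op4) : pure_product_state P -> fe 0 1 P = 1 -> P = ketbra2 R 0 1.
Proof.
move=> /pps_val [E [F [a [c [[-> hE hF e00 f00] [ha hc h1 _]]]]]] h.
rewrite h in h1.
have a1 : a = 1 by nra.
have c0 : c = 0 by nra.
subst a c.
by rewrite /ketbra2 (proj1 (proj_ketbra _ hE) e00) (proj2 (proj_ketbra _ hF) f00).
Qed.

Lemma pure10 (P : op4) : pure_product_state P -> fe 1 0 P = 1 -> P = ketbra2 R 1 0.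
Proof.
move=> /pps_val [E [F [a [c [[-> hE hF e00 f00] [ha hc _ h1]]]]]] h.
rewrite h in h1.
have a1 : a = 0 by nra.
have c0 : c = 1 by nra.
subst a c.
by rewrite /ketbra2 (proj2 (proj_ketbra _ hE) e00) (proj1 (proj_ketbra _ hF) f00).
Qed.

Lemma pure_bnd i j (P : op4) : (i, j) = (0, 1) \/ (i, j) = (1, 0) ->
  pure_product_state P -> 0 <= fe i j P <= 1.
Proof.
move=> hij /pps_val [E [F [a [c [_ [ha hc h1 h2]]]]]].
by case: hij => [[-> ->]|[-> ->]]; rewrite ?h1 ?h2; apply/andP; split; nra.
Qed.

Lemma K_bnd i j (A : op4) : (i, j) = (0, 1) \/ (i, j) = (1, 0) ->
  Ksep A -> 0 <= fe i j A <= 1.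
Proof.
move=> hij [n [lam [P [hl [hs [hP ->]]]]]].
rewrite fe_sum; apply/andP; split.
  by apply: sumr_ge0 => k _; apply: mulr_ge0 => //; case/andP: (pure_bnd _ _ _ hij (hP k)).
rewrite -hs; apply: ler_sum => k _.
case/andP: (pure_bnd _ _ _ hij (hP k)) => h0 h1.
have := hl k; nra.
Qed.

Lemma Ksep_fe1 i j (hij : (i, j) = (0, 1) \/ (i, j) = (1, 0))
  (hpure : forall P, pure_product_state P -> fe i j P = 1 -> P = ketbra2 R i j)
  (A : op4) : Ksep A -> fe i j A = 1 -> A = ketbra2 R i j.
Proof.
move=> [n [lam [P [hl [hs [hP ->]]]]]]; rewrite fe_sum => h.
have h0 : \sum_(k < n) lam k * (1 - fe i j (P k)) = 0.
  under eq_bigr do rewrite mulrBr mulr1.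
  by rewrite sumrB hs h subrr.
have hk k : rc (lam k) *: P k = rc (lam k) *: ketbra2 R i j.
  have hnn : forall k' : 'I_n, true -> 0 <= lam k' * (1 - fe i j (P k')).
    move=> k' _; apply: mulr_ge0 => //.
    by case/andP: (pure_bnd _ _ _ hij (hP k')) => _ h1; rewrite subr_ge0.
  have := psumr_eq0P (i:=k) hnn h0 isT.
  move/eqP; rewrite mulf_eq0 subr_eq0 => /orP[/eqP -> | /eqP e].
    by rewrite rc0 !scale0r.
  by rewrite (hpure _ (hP k) (esym e)).
rewrite (eq_bigr _ (fun k _ => hk k)) -scaler_suml.
have -> : \sum_(k < n) rc (lam k) = rc (\sum_(k < n) lam k) by rewrite /rc rmorph_sum.
by rewrite hs rc1 scale1r.
Qed.

Lemma ext_ij i j (hij : (i, j) = (0, 1) \/ (i, j) = (1, 0))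
  (hpure : forall P, pure_product_state P -> fe i j P = 1 -> P = ketbra2 R i j)
  (hk1 : fe i j (ketbra2 R i j) = 1) : K_extreme (ketbra2 R i j).
Proof.
split; first exact: pure_K _ (ketbra2_pure i j).
move=> a b t ha hb /andP[t0 t1] hx.
have := f_equal (fe i j) hx; rewrite fe_cconv hk1 => e.
case/andP: (K_bnd _ _ _ hij ha) => a0 a1.
case/andP: (K_bnd _ _ _ hij hb) => b0 b1.
have fa : fe i j a = 1 by nra.
have fb : fe i j b = 1 by nra.
by split; apply: Ksep_fe1.
Qed.

Lemma ar_le i j (hij : (i, j) = (0, 1) \/ (i, j) = (1, 0)) (x z : op4) :
  fe i j x = 1 -> Ksep z -> affine_ratio x z <= fe i j z.
Proof.
move=> hx hz; rewrite /affine_ratio.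
apply: ge_inf.
  exists 0 => r [f [_ [hf [_ ->]]]]; by case/andP: (hf z hz).
exists (fe i j); split; first by move=> a b t _ _ _; exact: fe_cconv.
split; first by move=> k hk; exact: K_bnd.
by split.
Qed.

Lemma ar_ge0 (x y : op4) : Ksep y -> 0 <= affine_ratio x y.
Proof.
move=> hy; apply: lb_le_inf.
  exists 1, (fun _ => 1); split; first by move=> a b t _ _ _; ring.
  split; first by move=> k _; rewrite lexx ler01.
  by split.
by move=> r [f [_ [hf [_ ->]]]]; case/andP: (hf y hy).
Qed.

Lemma ext_pure (z : op4) : K_extreme z -> pure_product_state z.
Proof.
case=> [[n [lam [P [hl [hs [hP ez]]]]]] hext].
case: (pickP (fun k => 0 < lam k)) => [k hk | h0]; last first.
  have : \sum_(k < n) lam k = 0.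
    apply: big1 => k _; have := h0 k; have := hl k => h /negbT.
    by rewrite -leNgt => h'; apply/le_anti; rewrite h h'.
  by rewrite hs => /eqP; rewrite oner_eq0.
have hsplit : \sum_(j < n) lam j = lam k + \sum_(j < n | j != k) lam j by rewrite (bigD1 k).
have hzs : z = rc (lam k) *: P k + \sum_(j < n | j != k) rc (lam j) *: P j by rewrite ez (bigD1 k).
have hrest : 0 <= \sum_(j < n | j != k) lam j by apply: sumr_ge0.
have [l1 | l1] := eqVneq (lam k) 1.
  have hr0 : \sum_(j < n | j != k) lam j = 0 by lra.
  have hz : \sum_(j < n | j != k) rc (lam j) *: P j = 0.
    apply: big1 => j hj.
    by rewrite (psumr_eq0P (i:=j) (fun j _ => hl j) hr0 hj) rc0 scale0r.
  by rewrite hzs hz addr0 l1 rc1 scale1r.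
have lt1 : lam k < 1 by rewrite lt_neqAle l1 /=; lra.
have l1' : 1 - lam k != 0 by rewrite subr_eq0 eq_sym.
pose lam' j := if j == k then 0 else lam j / (1 - lam k).
pose b := \sum_(j < n) rc (lam' j) *: P j.
have hb : Ksep b.
  exists n, lam', P; split; [|split; [|split => //]].
  - move=> j; rewrite /lam'; case: eqP => _ //; apply: divr_ge0 => //; lra.
  - rewrite (bigD1 k) //= /lam' eqxx add0r.
    rewrite (eq_bigr (fun j => lam j / (1 - lam k))); last by move=> j /negbTE ->.
    rewrite -mulr_suml.
    have -> : \sum_(j < n | j != k) lam j = 1 - lam k by lra.
    by rewrite divff.
have hzc : z = cconv (lam k) (P k) b.
  rewrite /cconv /b (bigD1 k) //= /lam' eqxx rc0 scale0r add0r scaler_sumr {1}hzs.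
  congr (_ + _); apply: eq_bigr => j /negbTE hj.
  rewrite hj scalerA -rcM; congr (rc _ *: _); field; exact: l1'.
have := hext (P k) b (lam k) (pure_K _ (hP k)) hb.
rewrite hk lt1 => /(_ isT hzc) [<- _]; exact: hP.
Qed.

End S.

Theorem lemma3 (R : realType) :
  K_orthogonal (ketbra2 R 0 1) (ketbra2 R 1 0) /\
  ~ K_superposable (ketbra2 R 0 1) (ketbra2 R 1 0).
Proof.
have h01 : ((0 : 'I_2), (1 : 'I_2)) = (0, 1) \/ ((0 : 'I_2), (1 : 'I_2)) = (1, 0) by left.
have h10 : ((1 : 'I_2), (0 : 'I_2)) = (0, 1) \/ ((1 : 'I_2), (0 : 'I_2)) = (1, 0) by right.
have e01 := @ext_ij R _ _ h01 (@pure01 R) (fe_k01 R).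
have e10 := @ext_ij R _ _ h10 (@pure10 R) (fe_k10 R).
split.
  split => //; split => //.
  apply/le_anti/andP; split; last exact: @ar_ge0 R _ _ (@pure_K R _ (ketbra2_pure R _ _)).
  by have := @ar_le R _ _ h01 _ _ (fe_k01 R) (@pure_K R _ (ketbra2_pure R 1 0)); rewrite fe_k01'.
case=> _ [z [hz [h1 h2]]].
have hp := @ext_pure R _ hz.
have := @ar_le R _ _ h01 _ _ (fe_k01 R) (@pure_K R _ hp); rewrite h1.
have := @ar_le R _ _ h10 _ _ (fe_k10 R) (@pure_K R _ hp); rewrite h2.
case: (@pps_val R _ hp) => E [F [a [c [_ [ha hc -> ->]]]]].
move=> q1 q2; clear h01 h10 e01 e10 h1 h2 hz hp.
have q3 : (2 : R)^-1 * 2 = 1 by rewrite mulVf // pnatr_eq0.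
nra.
Qed.
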